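(* $\mathrm{GenSpec}\preceq F_{\mathrm{weak}}$: for all graphs $G,H$, if $F_{\mathrm{weak}}(G)=F_{\mathrm{weak}}(H)$ then $\mathrm{Spec}(G)=\mathrm{Spec}(H)$ and $\mathrm{Spec}(\overline G)=\mathrm{Spec}(\overline H)$, where $\overline G$ denotes the complement graph.
   Context: Graphs are finite, simple and undirected with adjacency matrix $A$. $\mathrm{Spec}(G)$ is the multiset of eigenvalues of $A$. Let $\mu_1<\dots<\mu_m$ be the distinct eigenvalues, $P_i$ the orthogonal projection matrix onto the eigenspace of $\mu_i$, $P_*(x,y)=(P_1(x,y),\dots,P_m(x,y))$. Fürer's weak spectral invariant is $F_{\mathrm{weak}}(G)=\big(\mathrm{Spec}(G),\{\!\{(P_*(x,x),\{\!\{P_*(x,y)\}\!\}_{y\in V(G)})\}\!\}_{x\in V(G)}\big)$, where $\{\!\{\cdot\}\!\}$ denotes a multiset. $\mathrm{GenSpec}(G)=(\mathrm{Spec}(G),\mathrm{Spec}(\overline G))$ (the generalized spectrum). *)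

(* Defs.v *)
From HB Require Import structures.
From mathcomp Require Import all_boot all_order all_algebra.
From mathcomp Require Import finmap multiset.
From mathcomp Require Import polyrcf.
From mathcomp Require Import reals.
From Stdlib Require Import ClassicalEpsilon.

Set Implicit Arguments.
Unset Strict Implicit.
Unset Printing Implicit Defensive.

Import Order.TTheory GRing.Theory Num.Theory.
Local Open Scope mset_scope.
Local Open Scope ring_scope.

Record graph := Graph {
  gV : finType;
  gadj : rel gV;
  gadj_sym : symmetric gadj;
  gadj_irr : irreflexive gadj }.

Definition compl_adj (G : graph) : rel (gV G) :=
  fun x y => (x != y) && ~~ gadj x y.

Lemma compl_adj_sym G : symmetric (@compl_adj G).
Proof. by move=> x y; rewrite /compl_adj eq_sym gadj_sym. Qed.

Lemma compl_adj_irr G : irreflexive (@compl_adj G).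
Proof. by move=> x; rewrite /compl_adj eqxx. Qed.

Definition compl (G : graph) : graph :=
  @Graph (gV G) (@compl_adj G) (@compl_adj_sym G) (@compl_adj_irr G).

Definition adjmx (R : realType) (G : graph) : 'M[R]_#|gV G| :=
  \matrix_(i, j) (gadj (enum_val i) (enum_val j))%:R.

Definition eigs (R : realType) n (A : 'M[R]_n) : seq R :=
  rootsR (char_poly A).   (* the distinct eigenvalues, increasing *)

Definition spec_mx (R : realType) n (A : 'M[R]_n) : {mset R} :=
  seq_mset (flatten [seq nseq (mup mu (char_poly A)) mu | mu <- eigs A]).

Definition Spec (R : realType) (G : graph) : {mset R} := spec_mx (adjmx R G).

Definition GenSpec (R : realType) (G : graph) : {mset R} * {mset R} :=
  (Spec R G, Spec R (compl G)).

Definition eigproj (R : realType) n (A : 'M[R]_n) (mu : R) : 'M[R]_n :=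
  epsilon (inhabits 0) (fun P : 'M[R]_n =>
    [/\ P *m P = P, P^T = P & (P == eigenspace A mu)%MS]).

Definition Pstar (R : realType) n (A : 'M[R]_n) (x y : 'I_n) : seq R :=
  [seq eigproj A mu x y | mu <- eigs A].

Definition Fweak_mx (R : realType) n (A : 'M[R]_n)
  : {mset R} * {mset (seq R * {mset (seq R)})} :=
  (spec_mx A,
   seq_mset [seq (Pstar A x x, seq_mset [seq Pstar A x y | y <- enum 'I_n])
            | x <- enum 'I_n]).

Definition Fweak (R : realType) (G : graph) := Fweak_mx (adjmx R G).

(* Main.v *)
Require Import Defs.
From mathcomp Require Import all_boot all_algebra finmap multiset reals.
From HB Require Import structures.
From mathcomp Require Import all_boot all_order all_algebra.
From mathcomp Require Import finmap multiset polyrcf complex reals.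
From mathcomp Require Import sesquilinear spectral.
From Stdlib Require Import ClassicalEpsilon.
From mathcomp Require Import ring lra.
Set Implicit Arguments.
Unset Strict Implicit.
Unset Printing Implicit Defensive.
Import Order.TTheory GRing.Theory Num.Theory.
Local Open Scope ring_scope.

Lemma char_poly_conj (F : fieldType) n (P D : 'M[F]_n) : P \in unitmx ->
  char_poly (invmx P *m D *m P) = char_poly D.
Proof.
move=> Pu; rewrite /char_poly /char_poly_mx.
set f := (@polyC F).
set iP := map_mx f (invmx P); set P' := map_mx f P; set D' := map_mx f D.
have e1 : iP *m P' = 1%:M.
  by rewrite -map_mxM mulVmx // map_mx1.
have eX : 'X%:M = iP *m 'X%:M *m P' :> 'M[{poly F}]_n.
  by rewrite scalar_mxC -mulmxA e1 mulmx1.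
have -> : map_mx f (invmx P *m D *m P) = iP *m D' *m P' by rewrite !map_mxM.
rewrite [in LHS]eX -mulmxBl -mulmxBr !det_mulmx mulrC mulrA -det_mulmx.
by rewrite [\det (P' *m iP)]det_mulmx [\det P' * _]mulrC -det_mulmx e1 det1 mul1r.
Qed.

Lemma vvT0 (R : realFieldType) n (w : 'rV[R]_n) : w *m w^T = 0 -> w = 0.
Proof.
move=> /matrixP /(_ 0 0); rewrite !mxE => h.
have: \sum_j w 0 j ^+ 2 = 0 by rewrite -[RHS]h; apply: eq_bigr => j _; rewrite [w^T _ _]mxE expr2.
move/psumr_eq0P => H; apply/rowP => j; rewrite mxE.
by apply/eqP; rewrite -sqrf_eq0 H // => i _; exact: sqr_ge0.
Qed.

Lemma orthproj_ex (R : realFieldType) n (E : 'M[R]_n) :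
  exists P : 'M[R]_n, [/\ P *m P = P, P^T = P & (P == E)%MS].
Proof.
move: (row_base E) (row_base_free E) (eq_row_base E) => U Ufree Ueq.
set G := U *m U^T.
have Gu : G \in unitmx.
  rewrite -row_free_unit; apply: inj_row_free => v vG0.
  have : (v *m U) *m (v *m U)^T = 0 by rewrite trmx_mul mulmxA -(mulmxA v) vG0 mul0mx.
  move/vvT0 => vU0; apply: (row_free_inj Ufree).
  by rewrite vU0 mul0mx.
have GT : G^T = G by rewrite /G trmx_mul trmxK.
exists (U^T *m invmx G *m U); split.
- by rewrite !mulmxA -(mulmxA (U^T *m invmx G) U) -/G mulmxK.
- by rewrite !trmx_mul trmxK trmx_inv GT mulmxA.
- apply/eqmxP; apply: (eqmx_trans _ Ueq); apply/eqmxP.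
  apply/andP; split; first exact: submxMl.
  have eU : U *m (U^T *m invmx G *m U) = U by rewrite !mulmxA -/G mulmxV // mul1mx.
  rewrite -{1}eU.
  exact: submxMl.
Qed.

Lemma sym_split (R : rcfType) n (A : 'M[R]_n) : A^T = A ->
  exists rs : seq R, char_poly A = \prod_(x <- rs) ('X - x%:P).
Proof.
move=> Asym.
pose f := real_complex R.
pose AC := map_mx f A.
have ACh : AC \is hermsymmx.
  apply: realsym_hermsym.
    by apply/is_hermitianmxP; rewrite expr0 scale1r /AC map_trmx Asym map_mx_id.
  by apply/mxOverP => i j; rewrite mxE; apply/complex_realP; exists (A i j).
have dreal := hermitian_spectral_diag_real ACh.
have /orthomx_spectralP ACE := hermitian_normalmx ACh.
set d := spectral_diag AC in dreal ACE *.
have cAC : char_poly AC = \prod_(i < n) ('X - (d 0 i)%:P).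
  rewrite [in LHS]ACE char_poly_conj ?spectral_unit // char_poly_trig ?diag_mx_is_trig //.
  by apply: eq_bigr => i _; rewrite mxE eqxx mulr1n.
exists [seq complex.Re (d 0 i) | i <- enum 'I_n].
apply: (@map_poly_inj _ _ f).
rewrite map_char_poly -/AC cAC rmorph_prod big_map big_enum /=.
apply: eq_bigr => i _; rewrite map_polyXsubC /f.
by move/mxOverP: dreal => /(_ 0 i) /RRe_real {1}<-.
Qed.
Lemma in_rootsR (R : rcfType) (p : {poly R}) x : p != 0 -> (x \in rootsR p) = root p x.
Proof. by move=> p0; rewrite -(roots_on_rootsR p0 x) in_itv. Qed.

Lemma eigprojP (R : realType) n (A : 'M[R]_n) mu :
  [/\ eigproj A mu *m eigproj A mu = eigproj A mu, (eigproj A mu)^T = eigproj A mu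
    & (eigproj A mu == eigenspace A mu)%MS].
Proof.
rewrite /eigproj; case: (orthproj_ex (eigenspace A mu)) => P0 H.
exact: (@epsilon_spec _ (inhabits 0) (fun P : 'M[R]_n => [/\ P *m P = P, P^T = P & (P == eigenspace A mu)%MS]) (ex_intro _ P0 H)).
Qed.

Lemma CH_prod (F : fieldType) n (A : 'M[F]_n) (rs : seq F) :
  char_poly A = \prod_(x <- rs) ('X - x%:P) ->
  \big[mulmx/1%:M]_(x <- rs) (A - x%:M) = 0.
Proof.
case: n A => [|n'] A h; first by rewrite flatmx0.
have := Cayley_Hamilton A; rewrite h rmorph_prod /= => <-.
by apply: eq_bigr => x _; rewrite rmorphB /= horner_mx_X horner_mx_C.
Qed.

Lemma det_rank1 (F : comNzRingType) n (w : 'cV[F]_n) (v : 'rV[F]_n) :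
  \det (1%:M - w *m v) = 1 - (v *m w) 0 0.
Proof.
have e1 : block_mx 1%:M 0 w 1%:M *m block_mx 1%:M v 0 (1%:M - w *m v)
   = block_mx 1%:M v w 1%:M :> 'M[F]_(1 + n).
  by rewrite mulmx_block !(mul1mx, mul0mx, mulmx0, mulmx1, addr0, add0r) addrC subrK.
have e2 : block_mx (1%:M - v *m w) v 0 1%:M *m block_mx 1%:M 0 w 1%:M
   = block_mx 1%:M v w 1%:M :> 'M[F]_(1 + n).
  by rewrite mulmx_block !(mul1mx, mul0mx, mulmx0, mulmx1, addr0, add0r) subrK.
have := congr1 determinant (etrans e1 (esym e2)).
rewrite !det_mulmx det_lblock det_ublock det_ublock !det1 !mul1r !mulr1.
by move=> ->; rewrite det_mx11 !mxE.
Qed.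

Lemma horner_char (F : fieldType) n (B : 'M[F]_n) x :
  (char_poly B).[x] = \det (x%:M - B).
Proof.
rewrite /char_poly -horner_evalE -det_map_mx; congr determinant.
apply/matrixP => i j; rewrite !mxE /= horner_evalE.
by rewrite hornerD hornerN hornerMn hornerX hornerC.
Qed.

Lemma poly_eq_large (F : realFieldType) (p q : {poly F}) (b : F) :
  (forall x, b < x -> p.[x] = q.[x]) -> p = q.
Proof.
move=> h; apply/eqP; rewrite -subr_eq0; apply/negPn/negP => r0.
set r := p - q in r0.
suff : (size r < size r)%N by rewrite ltnn.
have := @max_poly_roots _ r [seq b + 1 + i%:R | i <- iota 0 (size r)] r0.
rewrite size_map size_iota; apply.
- apply/allP => y /mapP [i _ ->]; rewrite /root /r hornerD hornerN h ?subrr //.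
  by rewrite -addrA ltrDl ltr_pwDl // ler0n.
- rewrite map_inj_uniq ?iota_uniq // => i j /addrI /eqP.
  by rewrite eqr_nat => /eqP.
Qed.


Lemma count_flat (R : rcfType) (p : {poly R}) y : p != 0 ->
  count_mem y (flatten [seq nseq (mup mu p) mu | mu <- rootsR p]) = mup y p.
Proof.
move=> p0; rewrite count_flatten sumnE !big_map.
under eq_bigr do rewrite count_nseq /=.
have [yin|yout] := boolP (y \in rootsR p).
  rewrite (bigD1_seq y) ?uniq_roots //= eqxx mul1n big1_seq ?addn0 //.
  by move=> mu /andP[/negbTE ne _]; rewrite ne.
rewrite big1_seq; last by move=> mu /= muin; case: eqP => // ey; rewrite -ey muin in yout.
by rewrite mupNroot // -in_rootsR.
Qed.

Definition sP (R : realType) n (A : 'M[R]_n) (mu : R) : R :=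
  \sum_x \sum_y eigproj A mu x y.

Definition qpoly (R : realType) (p : {poly R}) : {poly R} :=
  (-1) ^+ (size p).-1 *: (p \Po (- 'X - 1)).

Definition Fpoly (R : realType) (p : {poly R}) (e : seq R) (s : R -> R) : {poly R} :=
  qpoly p - \sum_(mu <- e) s mu *: (qpoly p %/ ('X + (1 + mu)%:P)).

Section Proj.
Context (R : realType) (n : nat) (A : 'M[R]_n) (Asym : A^T = A).
Local Notation P := (eigproj A).

Lemma projA mu : P mu *m A = mu *: P mu.
Proof. by case: (eigprojP A mu) => _ _ /andP[/eigenspaceP]. Qed.

Lemma Aproj mu : A *m P mu = mu *: P mu.
Proof.
case: (eigprojP A mu) => _ PT _.
by have := congr1 trmx (projA mu); rewrite trmx_mul PT Asym linearZ /= PT.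
Qed.

Lemma sub_proj m (v : 'M[R]_(m, n)) mu : (v <= P mu)%MS -> v *m P mu = v.
Proof.
case: (eigprojP A mu) => PP _ _ /submxP [D ->].
by rewrite -mulmxA PP.
Qed.

Lemma proj_orth mu nu : mu != nu -> P mu *m P nu = 0.
Proof.
move=> mn.
have : (mu - nu) *: (P mu *m P nu) = 0.
  have e1 : mu *: (P mu *m P nu) = P mu *m A *m P nu by rewrite projA scalemxAl.
  have e2 : nu *: (P mu *m P nu) = P mu *m A *m P nu by rewrite -mulmxA Aproj scalemxAr.
  by rewrite scalerBl e1 e2 subrr.
by move/eqP; rewrite scaler_eq0 subr_eq0 (negbTE mn) /= => /eqP.
Qed.


Lemma kill_vec (w : 'rV[R]_n) (rs : seq R) :
  (forall x, x \in rs -> x \in eigs A) ->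
  (forall nu, nu \in eigs A -> w *m P nu = 0) ->
  w *m \big[mulmx/1%:M]_(x <- rs) (A - x%:M) = 0 -> w = 0.
Proof.
elim: rs w => [|x rs IH] w hin hw; first by rewrite big_nil mulmx1.
rewrite big_cons mulmxA => /IH h.
have wx : w *m (A - x%:M) = 0.
  apply: h => [y yin|nu nuin]; first by apply: hin; rewrite inE yin orbT.
  by rewrite mulmxBr mulmxBl -mulmxA Aproj -scalemxAr hw // scaler0
     mul_mx_scalar -scalemxAl hw // scaler0 subrr.
have : (w <= P x)%MS.
  case: (eigprojP A x) => _ _ /andP[_ EP]; apply: submx_trans EP.
  by apply/eigenspaceP; move/eqP: wx; rewrite mulmxBr subr_eq0 mul_mx_scalar => /eqP.
move/sub_proj => <-; apply: hw; apply: hin; exact: mem_head.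
Qed.

Lemma char_split_eigs : exists rs : seq R,
  char_poly A = \prod_(x <- rs) ('X - x%:P) /\ (forall x, x \in rs -> x \in eigs A).
Proof.
have [rs h] := sym_split Asym; exists rs; split => // x xin.
rewrite /eigs in_rootsR ?h ?root_prod_XsubC //.
by rewrite -h -size_poly_eq0 size_char_poly.
Qed.

Lemma uniq_eigs : uniq (eigs A).
Proof. exact: uniq_roots. Qed.

Lemma resolution : \sum_(mu <- eigs A) P mu = 1%:M.
Proof.
set e := eigs A.
have SP nu : nu \in e -> (\sum_(mu <- e) P mu) *m P nu = P nu.
  move=> nuin; rewrite mulmx_suml (bigD1_seq nu) ?uniq_eigs //=.
  case: (eigprojP A nu) => -> _ _.
  by rewrite big1_seq ?addr0 // => mu /andP[mn _]; apply: proj_orth.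
have [rs [h hin]] := char_split_eigs.
apply/eqP; rewrite eq_sym -subr_eq0; apply/eqP/row_matrixP => i.
rewrite row0; apply: (kill_vec (rs := rs)) => //.
- move=> nu nuin; rewrite -row_mul mulmxBl mul1mx SP // subrr row0 //.
- by rewrite -row_mul (CH_prod h) mulmx0 row0.
Qed.


Lemma comb_mul (f g : R -> R) :
  (\sum_(mu <- eigs A) f mu *: P mu) *m (\sum_(nu <- eigs A) g nu *: P nu)
  = \sum_(mu <- eigs A) (f mu * g mu) *: P mu.
Proof.
rewrite mulmx_suml; apply: eq_big_seq => mu muin.
rewrite mulmx_sumr (bigD1_seq mu) ?uniq_eigs //= big1_seq ?addr0.
  by rewrite -scalemxAl -scalemxAr scalerA; case: (eigprojP A mu) => -> _ _.
move=> nu /andP[nm _]; rewrite -scalemxAl -scalemxAr proj_orth ?scaler0 //.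
by rewrite eq_sym.
Qed.

Lemma sumI c : \sum_(mu <- eigs A) c *: P mu = c%:M.
Proof. by rewrite -scaler_sumr resolution scalemx1. Qed.

Lemma sumA : \sum_(mu <- eigs A) mu *: P mu = A.
Proof.
transitivity (A *m \sum_(mu <- eigs A) P mu); last by rewrite resolution mulmx1.
by rewrite mulmx_sumr; apply: eq_bigr => mu _; rewrite Aproj.
Qed.

Lemma quadP mu (u : 'cV[R]_n) : u = const_mx 1 -> (u^T *m (P mu *m u)) 0 0 = sP A mu.
Proof.
move=> ->; rewrite !mxE; apply: eq_bigr => i _; rewrite !mxE mul1r.
by apply: eq_bigr => j _; rewrite !mxE mulr1.
Qed.

Lemma eval_key x : (forall mu, mu \in eigs A -> x + 1 + mu != 0) ->
  \det (x%:M - (const_mx 1 - 1%:M - A)) =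
  (qpoly (char_poly A)).[x] * (1 - \sum_(mu <- eigs A) (x + 1 + mu)^-1 * sP A mu).
Proof.
move=> cnz.
set e := eigs A.
set u : 'cV[R]_n := const_mx 1.
have J : const_mx 1 = u *m u^T.
  by apply/matrixP => i j; rewrite !mxE big_ord1 !mxE mulr1.
set M := (x + 1)%:M + A.
have Me : \sum_(mu <- e) (x + 1 + mu) *: P mu = M.
  rewrite (eq_bigr (fun mu => (x + 1) *: P mu + mu *: P mu)); last first.
    by move=> mu _; rewrite scalerDl.
  by rewrite big_split /= sumI sumA.
set N := \sum_(mu <- e) (x + 1 + mu)^-1 *: P mu.
have MN : M *m N = 1%:M.
  rewrite -Me comb_mul -(sumI 1); apply: eq_big_seq => mu muin.
  by rewrite divff ?cnz.
have E1 : x%:M - (const_mx 1 - 1%:M - A) = M *m (1%:M - (N *m u) *m u^T).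
  rewrite mulmxBr mulmx1 !mulmxA MN mul1mx -J /M.
  apply/matrixP => i j; rewrite !mxE.
  case: (i == j); rewrite ?mulr1n ?mulr0n.
    by ring.
  by ring.
rewrite E1 det_mulmx det_rank1.
have -> : (u^T *m (N *m u)) 0 0 = \sum_(mu <- e) (x + 1 + mu)^-1 * sP A mu.
  rewrite /N mulmx_suml mulmx_sumr summxE; apply: eq_bigr => mu _.
  by rewrite -scalemxAl -scalemxAr mxE quadP.
congr (_ * _).
rewrite /qpoly size_char_poly /= hornerZ horner_comp.
have -> : M = (-1) *: ((- (x + 1))%:M - A).
    rewrite scaleN1r opprB /M addrC; congr (_ + _); apply/matrixP => i j; rewrite !mxE mulNrn opprK //.
rewrite detZ -horner_char.
congr (_ * (char_poly A).[_]).
by rewrite !hornerE opprD.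
Qed.

Lemma key_char :
  char_poly (const_mx 1 - 1%:M - A) = Fpoly (char_poly A) (eigs A) (sP A).
Proof.
set e := eigs A; set p := char_poly A.
have p0 : p != 0 by rewrite -size_poly_eq0 size_char_poly.
set b := \sum_(mu <- e) `|mu|.
apply: (@poly_eq_large _ _ _ b) => x xb.
have cpos mu : mu \in e -> 0 < x + 1 + mu.
  move=> muin.
  have h1 : `|mu| <= b.
    by rewrite /b (bigD1_seq mu) ?uniq_eigs //= lerDl sumr_ge0.
  have h2 : - mu <= `|mu| by rewrite -normrN ler_norm.
  lra.
have cnz mu : mu \in e -> x + 1 + mu != 0 by move/cpos; rewrite lt0r => /andP[].
rewrite horner_char eval_key // -/p.
set q := qpoly p.
rewrite /Fpoly -/q hornerD hornerN horner_sum mulrBr mulr1; congr (_ - _).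
rewrite mulr_sumr; apply: eq_big_seq => mu muin.
rewrite [RHS]hornerZ.
have dv : ('X + (1 + mu)%:P) %| q.
  rewrite -[(1 + mu)%:P]opprK -polyCN dvdp_XsubCl /root /q /qpoly hornerZ horner_comp.
  rewrite !hornerE opprK addrAC subrr add0r.
  have : root p mu by rewrite -in_rootsR.
  by rewrite /root => /eqP ->; rewrite mulr0.
have qx : q.[x] = (q %/ ('X + (1 + mu)%:P)).[x] * (x + 1 + mu).
  by rewrite -{1}(divpK dv) hornerM !hornerE.
by rewrite qx mulrA mulfK ?cnz // mulrC.
Qed.

Lemma char_spec : char_poly A = \prod_(mu <- (spec_mx A : seq R)) ('X - mu%:P).
Proof.
have [rs [h _]] := char_split_eigs.
have p0 : char_poly A != 0 by rewrite -size_poly_eq0 size_char_poly.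
rewrite {1}h; apply: perm_big.
rewrite /spec_mx perm_sym; apply: perm_trans (perm_eq_seq_mset _) _.
apply/allP => y _; apply/eqP; rewrite count_flat // h mu_prod_XsubC.
by [].
Qed.

End Proj.

Definition smset (R : realType) (p : {poly R}) : multiset R :=
  seq_mset (flatten [seq nseq (mup mu p) mu | mu <- rootsR p]).

Lemma spec_mxE (R : realType) n (B : 'M[R]_n) : spec_mx B = smset (char_poly B).
Proof. by []. Qed.

Lemma adjmx_sym (R : realType) (G : graph) : (adjmx R G)^T = adjmx R G.
Proof. by apply/matrixP => i j; rewrite !mxE gadj_sym. Qed.

Lemma adjmx_compl (R : realType) (G : graph) :
  adjmx R (compl G) = const_mx 1 - 1%:M - adjmx R G.
Proof.
apply/matrixP => i j; rewrite !mxE /= /compl_adj (inj_eq enum_val_inj).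
have [->|ne] := eqVneq i j; first by rewrite gadj_irr /= mulr1n subrr sub0r oppr0.
rewrite mulr0n subr0 /=; by case: (gadj _ _); rewrite ?subrr ?subr0.
Qed.

Lemma weak_sum (R : realType) n (A : 'M[R]_n) j : (j < size (eigs A))%N ->
  \sum_(t <- (seq_mset [seq (Pstar A x x, seq_mset [seq Pstar A x y | y <- enum 'I_n])
                      | x <- enum 'I_n] : seq _))
     \sum_(v <- enum_mset (t.2 : multiset _)) nth 0 v j = sP A (nth 0 (eigs A) j).
Proof.
move=> js.
rewrite (perm_big _ (perm_eq_seq_mset _)) big_map big_enum /=.
apply: eq_bigr => x _.
rewrite (perm_big _ (perm_eq_seq_mset _)) big_map big_enum /=.
by apply: eq_bigr => y _; rewrite (nth_map 0).
Qed.

Theorem theorem5p4 (R : realType) (G H : graph) :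
  Fweak R G = Fweak R H ->
  Spec R G = Spec R H /\ Spec R (compl G) = Spec R (compl H).
Proof.
rewrite /Fweak /Fweak_mx => -[hS hW]; split; first exact: hS.
set AG := adjmx R G in hS hW *; set AH := adjmx R H in hS hW *.
have sG := adjmx_sym R G; have sH := adjmx_sym R H.
have ch : char_poly AG = char_poly AH.
  by rewrite (char_spec sG) (char_spec sH) -/AG -/AH hS.
have ee : eigs AG = eigs AH by rewrite /eigs ch.
have ss mu : mu \in eigs AG -> sP AG mu = sP AH mu.
  move=> muin; have js : (index mu (eigs AG) < size (eigs AG))%N by rewrite index_mem.
  rewrite -{1}(nth_index 0 muin) -(weak_sum js) hW.
  by rewrite weak_sum -ee ?nth_index.
rewrite /Spec !adjmx_compl !spec_mxE (key_char sG) (key_char sH) -/AG -/AH ch -ee.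
rewrite /Fpoly; congr (smset (_ - _)); apply: eq_big_seq => mu muin.
by rewrite ss.
Qed.
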